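(* For every nested marble transducer $T$ (of any level $k\ge0$), the domain $\mathrm{dom}(f_T)$ of the transduction it recognizes is a regular language.
   Context: Nested marble transducers (NMT). For an input $u\in\Sigma^*$ of length $n$, machines read $\vdash u\dashv$, with positions $0,\dots,n+1$: position $0$ carries $\vdash$ and position $n+1$ carries $\dashv$. Level 0. A $(0,\Sigma,\Gamma)$-NMT (simple transducer) is $T=(A,\mu)$, where $A=(Q,q_0,F,\delta)$ is a DFA over $\Sigma\cup\{\vdash,\dashv\}$ and $\mu:F\to\Gamma^{\le1}$. Its operational semantics is $f^{op}_T(q,u)=(\mu(q_f),q_f)$ if $A$ goes from $q$ to some $q_f\in F$ reading $\vdash u\dashv$, undefined otherwise. Level $k\ge1$. A $(k,\Sigma,\Gamma)$-NMT is a tuple $T=(C,c_0,Q,q_0,F,\delta,\delta_{call},\delta_{ret},\mu,T')$ where: - $C$ is a finite set of marble colours and $c_0\in C$; - $Q$ is a finite set of states, $q_0$ is initial and $F\subseteq Q$ is accepting; - the assistant $T'$ is a $(k-1,\Sigma\times C,\Gamma)$-NMT with state set $Q'$ and accepting set $F'$; - $\delta:Q\times(\Sigma\cup\{\dashv\})\times C\rightharpoonup(C\cup\{\bot\})\times Q$; - $\delta_{call}:Q\times C\to Q'$ and $\delta_{ret}:Q\times C\times F'\to Q$; - $\mu:\mathrm{dom}(\delta)\to\Gamma^*$. A configuration on $u$ is $(q,i,v)$ with $q\in Q$, $0\le i\le n+1$ and $v\in C^{n+2-i}$, the marbles on positions $i,\dots,n+1$. Writing $v=cv'$ and $\sigma$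 for the letter at position $i$, the steps are: 1. If $1\le i\le n+1$ and $\delta(q,\sigma,c)=(c',q')$, then $(q,i,cv')\to(q',i-1,c'cv')$ with output $\mu(q,\sigma,c)$ (drop a marble, move left). 2. If $1\le i\le n$ and $\delta(q,\sigma,c)=(\bot,q')$, then $(q,i,cv')\to(q',i+1,v')$ with output $\mu(q,\sigma,c)$ (lift the marble, move right). 3. If $i=0$ and $f^{op}_{T'}(\delta_{call}(q,c),\tilde u)=(x,p)$, then $(q,0,cv')\to(\delta_{ret}(q,c,p),1,v')$ with output $x$. Here $\tilde u$ is $\vdash u\dashv$ annotated position-wise with the current marbles $cv'$. $f^{op}_T(q,u)=(x_1\cdots x_m,q_f)$ if the steps from $(q,n+1,c_0)$, with outputs $x_1,\dots,x_m$, reach a configuration with state $q_f\in F$, all earlier configurations having non-accepting states; otherwise it is undefined. At every level $k\ge0$, $f_T(u)$ is the first component of $f^{op}_T(q_0,u)$, and $k$ is the level of $T$. We write $k$-NMT for an NMT of level $k$. *)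

(* Defs.v *)
From mathcomp Require Import all_boot.
Set Implicit Arguments. Unset Strict Implicit. Unset Printing Implicit Defensive.

Inductive lett (Sigma : Type) : Type :=
| LM              (* |- , left endmarker  *)
| RM              (* -| , right endmarker *)
| Sym of Sigma.
Arguments LM {Sigma}. Arguments RM {Sigma}. Arguments Sym {Sigma}.

(* Finite sets of states / colours are represented by ordinals 'I_n.
   [nmt Gamma k Sigma nq] is the type of (k, Sigma, Gamma)-NMTs whose state set is 'I_nq.
   - Level 0: a DFA (q0, F, delta) over Sigma + {|-,-|} with output mu (only used on F),
     mu : Q -> Gamma^{<=1} encoded by option Gamma.
   - Level k+1: colours 'I_nc with c0, states 'I_nq with q0, F, assistant A, a level-k NMT
     over Sigma * 'I_nc with state set 'I_nq';
     delta q a c : partial (None = undefined); a : option Sigma with None = -| ;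
     result (Some c', q') = drop marble c', (None, q') = lift (bottom);
     call : Q -> C -> Q'; ret : Q -> C -> Q' -> Q (only used on F');
     mu : output, only used where delta is defined. *)
Inductive nmt (Gamma : Type) : nat -> Type -> nat -> Type :=
| Lvl0 (Sigma : Type) (nq : nat) (q0 : 'I_nq) (F : pred 'I_nq)
    (delta : 'I_nq -> lett Sigma -> 'I_nq) (mu : 'I_nq -> option Gamma) :
    nmt Gamma 0 Sigma nq
| LvlS (k : nat) (Sigma : Type) (nq nc nq' : nat) (c0 : 'I_nc) (q0 : 'I_nq)
    (F : pred 'I_nq) (A : nmt Gamma k (Sigma * 'I_nc)%type nq')
    (delta : 'I_nq -> option Sigma -> 'I_nc -> option (option 'I_nc * 'I_nq))
    (call : 'I_nq -> 'I_nc -> 'I_nq')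
    (ret : 'I_nq -> 'I_nc -> 'I_nq' -> 'I_nq)
    (mu : 'I_nq -> option Sigma -> 'I_nc -> seq Gamma) :
    nmt Gamma k.+1 Sigma nq.

Section Marble.
Variables (Sigma Gamma : Type) (nq nc : nat) (c0 : 'I_nc) (F : pred 'I_nq)
  (delta : 'I_nq -> option Sigma -> 'I_nc -> option (option 'I_nc * 'I_nq))
  (mu : 'I_nq -> option Sigma -> 'I_nc -> seq Gamma)
  (* sub q c w x q'' : calling the assistant in state call q c on the annotated
     word w yields (x, p) and q'' = ret q c p *)
  (sub : 'I_nq -> 'I_nc -> seq (Sigma * 'I_nc) -> seq Gamma -> 'I_nq -> Prop).

(* configuration (q, i, v): v = marbles on positions i, ..., n+1 *)
Definition config := ('I_nq * nat * seq 'I_nc)%type.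

(* letter at position i, 1 <= i <= n+1: Some u_i for i <= n, None (= -|) for i = n+1 *)
Definition letter_at (u : seq Sigma) (i : nat) : option Sigma := ohead (drop i.-1 u).

Inductive step (u : seq Sigma) : config -> seq Gamma -> config -> Prop :=
| StepDrop q i c v c' q' :
    1 <= i <= size u + 1 ->
    delta q (letter_at u i) c = Some (Some c', q') ->
    step u (q, i, c :: v) (mu q (letter_at u i) c) (q', i.-1, c' :: c :: v)
| StepLift q i c v q' :
    1 <= i <= size u ->
    delta q (letter_at u i) c = Some (None, q') ->
    step u (q, i, c :: v) (mu q (letter_at u i) c) (q', i.+1, v)
| StepCall q c v x q'' :
    (* annotated word: u with the marbles on positions 1..n *)
    sub q c (zip u (take (size u) v)) x q'' ->
    step u (q, 0, c :: v) x (q'', 1, v).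

Inductive exec (u : seq Sigma) : config -> seq Gamma -> config -> Prop :=
| ExecStop (cf : config) : F cf.1.1 -> exec u cf [::] cf
| ExecStep (cf cf' cf'' : config) x y :
    ~~ F cf.1.1 -> step u cf x cf' -> exec u cf' y cf'' -> exec u cf (x ++ y) cf''.

Definition runK (q : 'I_nq) (u : seq Sigma) (x : seq Gamma) (qf : 'I_nq) : Prop :=
  exists (i : nat) (v : seq 'I_nc), exec u (q, size u + 1, [:: c0]) x (qf, i, v).
End Marble.

(* operational semantics: opsem T q u x qf  <->  f^op_T(q,u) = (x, qf) *)
Fixpoint opsem (Gamma : Type) (k : nat) (Sigma : Type) (nq : nat)
    (T : nmt Gamma k Sigma nq) {struct T} :
    'I_nq -> seq Sigma -> seq Gamma -> 'I_nq -> Prop :=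
  match T in nmt _ k0 Sigma0 nq0
    return 'I_nq0 -> seq Sigma0 -> seq Gamma -> 'I_nq0 -> Prop with
  | Lvl0 _ _ _ F delta mu => fun q u x qf =>
      [/\ foldl delta q (LM :: rcons (map Sym u) RM) = qf, F qf &
          x = if mu qf is Some g then [:: g] else [::]]
  | LvlS _ _ _ _ _ c0 _ F A delta call ret mu => fun q u x qf =>
      runK c0 F delta mu
        (fun q1 c w y q2 => exists p, opsem A (call q1 c) w y p /\ q2 = ret q1 c p)
        q u x qf
  end.

Definition init (Gamma : Type) (k : nat) (Sigma : Type) (nq : nat)
    (T : nmt Gamma k Sigma nq) : 'I_nq :=
  match T with Lvl0 _ _ q0 _ _ _ => q0 | LvlS _ _ _ _ _ _ q0 _ _ _ _ _ _ => q0 end.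

Definition nmt_dom (Gamma : Type) (k : nat) (Sigma : Type) (nq : nat)
    (T : nmt Gamma k Sigma nq) (u : seq Sigma) : Prop :=
  exists (x : seq Gamma) (qf : 'I_nq), opsem T (init T) u x qf.

Definition regular (Sigma : finType) (L : seq Sigma -> Prop) : Prop :=
  exists (n : nat) (q0 : 'I_n) (Acc : pred 'I_n) (d : 'I_n -> Sigma -> 'I_n),
    forall w, L w <-> Acc (foldl d q0 w).

(* Main.v *)
Require Import Defs.
From mathcomp Require Import all_boot.
From Stdlib Require Import ClassicalEpsilon.
Set Implicit Arguments. Unset Strict Implicit. Unset Printing Implicit Defensive.

Definition pb (P : Prop) : bool := if excluded_middle_informative P then true else false.
Lemma pbP (P : Prop) : pb P <-> P.
Proof. by rewrite /pb; case: excluded_middle_informative. Qed.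

Section MarbleReg.
Variables (Sigma Gamma : Type) (nq nc : nat) (c0 : 'I_nc) (F : pred 'I_nq)
  (delta : 'I_nq -> option Sigma -> 'I_nc -> option (option 'I_nc * 'I_nq))
  (mu : 'I_nq -> option Sigma -> 'I_nc -> seq Gamma)
  (sub : 'I_nq -> 'I_nc -> seq (Sigma * 'I_nc) -> seq Gamma -> 'I_nq -> Prop).
Variables (S' : finType) (s0' : S') (d' : S' -> Sigma * 'I_nc -> S')
  (SG : 'I_nq -> 'I_nc -> S' -> 'I_nq -> Prop).
Hypothesis subP : forall q c w q2,
  (exists y, sub q c w y q2) <-> SG q c (foldl d' s0' w) q2.

Notation Q := 'I_nq.
Notation C := 'I_nc.
Notation TF := {ffun S' -> S'}.
Definition Key := (Q * C * TF * (Q + Q))%type.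

Definition tau' (a : option Sigma) (c : C) (t : TF) : TF :=
  if a is Some x then [ffun s => t (d' s (x, c))] else t.

Inductive nextB (B : {set Key}) (a : option Sigma) (c : C) (t : TF) : Q -> Q + Q -> Prop :=
| NStop q : F q -> nextB B a c t q (inr q)
| NLift q x q' : ~~ F q -> a = Some x -> delta q a c = Some (None, q') ->
    nextB B a c t q (inl q')
| NDropStop q c' q' qf : ~~ F q -> delta q a c = Some (Some c', q') ->
    (q', c', tau' a c t, inr qf) \in B -> nextB B a c t q (inr qf)
| NDropLift q c' q' q'' r : ~~ F q -> delta q a c = Some (Some c', q') ->
    (q', c', tau' a c t, inl q'') \in B -> nextB B a c t q'' r -> nextB B a c t q r.

Definition base (k : Key) : Prop :=
  let: (q, c, t, r) := k in
  (F q /\ r = inr q) \/ (~~ F q /\ exists q2, SG q c (t s0') q2 /\ r = inl q2).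

Definition s0 : {set Key} := [set k | pb (base k)].
Definition dB (B : {set Key}) (x : Sigma) : {set Key} :=
  [set k | pb (nextB B (Some x) k.1.1.2 k.1.2 k.1.1.1 k.2)].
Definition GG (q : Q) (W : {set Key}) (qf : Q) : Prop :=
  nextB W None c0 [ffun s => s] q (inr qf).

Inductive reach (u : seq Sigma) : nat -> config nq nc -> Q -> Prop :=
| R0 cf : F cf.1.1 -> reach u 0 cf cf.1.1
| RS m cf cf' x qf : ~~ F cf.1.1 -> step delta mu sub u cf x cf' ->
    reach u m cf' qf -> reach u m.+1 cf qf.

Lemma exec_reach u cf x cf' : exec F delta mu sub u cf x cf' -> exists m, reach u m cf cf'.1.1.
Proof.
elim=> [cf1 H | cf1 cf2 cf3 x1 y H1 H2 H3 [m Hm]]; first by exists 0; exact: R0.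
by exists m.+1; apply: RS H1 H2 Hm.
Qed.

Lemma reach_exec u m cf qf : reach u m cf qf -> exists x i v, exec F delta mu sub u cf x (qf, i, v).
Proof.
elim=> [[[q i] v] H | m1 cf1 cf2 x1 qf1 H1 H2 H3 [y [i [v Hy]]]].
  by exists [::], i, v; exact: ExecStop.
by exists (x1 ++ y), i, v; apply: ExecStep H1 H2 Hy.
Qed.

Lemma stepE u q i c v x cf' : step delta mu sub u (q, i, c :: v) x cf' ->
  (exists c' q', 1 <= i <= size u + 1 /\ delta q (letter_at u i) c = Some (Some c', q')
     /\ cf' = (q', i.-1, c' :: c :: v)) \/
  (exists q', 1 <= i <= size u /\ delta q (letter_at u i) c = Some (None, q')
     /\ cf' = (q', i.+1, v)) \/
  (i = 0 /\ exists q'', sub q c (zip u (take (size u) v)) x q'' /\ cf' = (q'', 1, v)).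
Proof.
move=> H; inversion H; subst.
- by left; exists c', q'.
- by right; left; exists q'.
- by right; right; split=> //; exists q''.
Qed.


Definition tauv (u : seq Sigma) (i : nat) (v : seq C) : TF :=
  [ffun s => foldl d' s (zip (drop i u) (take (size u - i) v))].

Definition BehAt (u : seq Sigma) (i : nat) (c : C) (t : TF) (q : Q) (r : Q + Q) : Prop :=
  if i is j.+1 then nextB (foldl dB s0 (take j u)) (letter_at u i) c t q r
  else base (q, c, t, r).

Lemma letter_some (u : seq Sigma) j : j < size u ->
  exists x, letter_at u j.+1 = Some x /\ drop j u = x :: drop j.+1 u.
Proof.
rewrite /letter_at /=; elim: u j => [|y u IH] [|j] //= Hj.
  by exists y; rewrite drop0.
exact: IH.
Qed.

Lemma letter_size (u : seq Sigma) j x : letter_at u j.+1 = Some x -> j < size u.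
Proof.
rewrite /letter_at /= ltnNge; apply: contraPN => H.
by rewrite drop_oversize.
Qed.

Lemma letter_end (u : seq Sigma) : letter_at u (size u + 1) = None.
Proof. by rewrite /letter_at addn1 /= drop_size. Qed.

Lemma zip0 (t : seq C) : zip ([::] : seq Sigma) t = [::].
Proof. by case: t. Qed.

Lemma tauP u j c v : j.+1 <= size u + 1 ->
  tauv u j (c :: v) = tau' (letter_at u j.+1) c (tauv u j.+1 v).
Proof.
rewrite addn1 ltnS leq_eqVlt => /orP [/eqP Hj | Hj].
  rewrite Hj.
  have -> : letter_at u (size u).+1 = None by rewrite -addn1 letter_end.
  by apply/ffunP => s; rewrite /tauv /tau' !ffunE drop_size drop_oversize ?leqnSn // !zip0.
have [x [-> Hd]] := letter_some Hj.
apply/ffunP => s; rewrite /tauv /tau' !ffunE Hd.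
have -> : size u - j = (size u - j.+1).+1 by rewrite subnSK.
by [].
Qed.

Lemma memB u j c t q r : j <= size u ->
  ((q, c, t, r) \in foldl dB s0 (take j u)) <-> BehAt u j c t q r.
Proof.
case: j => [|j] Hj.
  by rewrite take0 /= inE pbP.
have [x [Hx Hd]] := letter_some Hj.
have -> : take j.+1 u = rcons (take j u) x.
  have Hs : size (take j u) = j by rewrite size_takel // ltnW.
  rewrite -[in LHS](cat_take_drop j u) Hd take_cat Hs ltnNge leqnSn /= subSnn.
  by rewrite /= take0 cats1.
by rewrite foldl_rcons inE pbP /= Hx.
Qed.

Lemma reachE u m cf qf : reach u m cf qf ->
  (m = 0 /\ F cf.1.1 /\ qf = cf.1.1) \/
  exists m' cf' x, m = m'.+1 /\ ~~ F cf.1.1 /\ step delta mu sub u cf x cf' /\ reach u m' cf' qf.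
Proof.
case=> [cf1 H | m1 cf1 cf2 x1 qf1 H1 H2 H3]; first by left.
by right; exists m1, cf2, x1.
Qed.

Lemma claim_fwd u i : i <= size u + 1 -> forall m q c v qf, reach u m (q, i, c :: v) qf ->
  BehAt u i c (tauv u i v) q (inr qf) \/
  exists q' m', m' < m /\ BehAt u i c (tauv u i v) q (inl q') /\ reach u m' (q', i.+1, v) qf.
Proof.
elim: i => [_ | j IHj Hj] m q c v qf Hr.
  case: (reachE Hr) => [[_ [Fq ->]] | [m' [cf' [x [-> [nF [Hs Hr']]]]]]].
    by left; left.
  move: Hr'; case: (stepE Hs) => [[c' [q' [/andP [] //]]] | [[q' [/andP [] //]] | [_ [q'' [Hsub ->]]]]] Hr'.
  right; exists q'', m'; split=> //; split=> //.
  right; split=> //; exists q''; split=> //.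
  rewrite ffunE drop0 subn0; apply/subP; by exists x.
have Hj' : j <= size u by rewrite addn1 ltnS in Hj.
elim/ltn_ind: m q Hr => m IHm q Hr.
case: (reachE Hr) => [[_ [Fq ->]] | [m' [cf' [x [Em [nF [Hs Hr']]]]]]].
  by left; apply: NStop.
subst m.
move: Hr'; case: (stepE Hs) => [[c' [q' [_ [Hd ->]]]] | [[q' [Hi [Hd ->]]] | [//]]] Hr'.
  case: (IHj (ltnW Hj) m' q' c' (c :: v) qf Hr') => [HB | [q'' [m'' [Hlt [HB Hr'']]]]].
    rewrite (tauP _ _ Hj) in HB; move/memB: HB => /(_ Hj') HB.
    by left; apply: NDropStop nF Hd HB.
  rewrite (tauP _ _ Hj) in HB; move/memB: HB => /(_ Hj') HB.
  case: (IHm m'' (ltn_trans Hlt (ltnSn _)) q'' Hr'') => [HB2 | [q3 [m3 [Hlt3 [HB3 Hr3]]]]].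
    by left; apply: NDropLift nF Hd HB HB2.
  right; exists q3, m3; split; last split=> //.
    by apply: ltn_trans Hlt3 (ltn_trans Hlt (ltnSn _)).
  by apply: NDropLift nF Hd HB HB3.
have [y [Hy _]] := letter_some (Hi : j < size u).
right; exists q', m'; split=> //; split=> //.
by apply: NLift nF Hy Hd.
Qed.

Lemma claim_bwd u i : i <= size u + 1 -> forall c v q r, BehAt u i c (tauv u i v) q r ->
  match r with
  | inr qf => exists m, reach u m (q, i, c :: v) qf
  | inl q' => forall m qf, reach u m (q', i.+1, v) qf -> exists m', reach u m' (q, i, c :: v) qf
  end.
Proof.
elim: i => [_ | j IHj Hj] c v q r.
  case=> [[Fq ->] | [nF [q2 [HSG ->]]]].
    by exists 0; exact: (@R0 u (q, 0, c :: v)).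
  move=> m qf Hr; exists m.+1.
  rewrite ffunE drop0 subn0 in HSG.
  have [x Hx] := (subP _ _ _ _).2 HSG.
  apply: (@RS u _ (q, 0, c :: v)) => //; last exact: Hr.
  exact: StepCall Hx.
have Hj' : j <= size u by rewrite addn1 ltnS in Hj.
rewrite /BehAt => H; elim: H.
- by move=> q1 Fq; exists 0; exact: (@R0 u (q1, j.+1, c :: v)).
- move=> q1 x q' nF Ha Hd m qf Hr; exists m.+1.
  apply: (@RS u _ (q1, j.+1, c :: v)) => //; last exact: Hr.
  by apply: StepLift => //; exact: letter_size Ha.
- move=> q1 c' q' qf nF Hd Hin.
  move/memB: Hin => /(_ Hj'); rewrite -tauP // => HB.
  have [m Hm] := IHj (ltnW Hj) _ _ _ _ HB.
  exists m.+1; apply: (@RS u _ (q1, j.+1, c :: v)) => //; last exact: Hm.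
  by apply: StepDrop => //; rewrite Hj andbT.
- move=> q1 c' q' q'' r1 nF Hd Hin _ IHr.
  move/memB: Hin => /(_ Hj'); rewrite -tauP // => HB.
  have H2 := IHj (ltnW Hj) _ _ _ _ HB.
  have Hstep : forall m qf, reach u m (q'', j.+1, c :: v) qf ->
      exists m', reach u m' (q1, j.+1, c :: v) qf.
    move=> m qf Hr; have [m' Hm'] := H2 m qf Hr.
    exists m'.+1; apply: (@RS u _ (q1, j.+1, c :: v)) => //; last exact: Hm'.
    by apply: StepDrop => //; rewrite Hj andbT.
  case: r1 IHr => [q3 | qf] IHr.
    by move=> m qf Hr; have [m' Hm'] := IHr m qf Hr; exact: Hstep Hm'.
  by have [m Hm] := IHr; exact: Hstep Hm.
Qed.

Lemma nextB_None B c t q r : nextB B None c t q r -> exists qf, r = inr qf.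
Proof.
elim=> [q1 _ | q1 x q' _ Hx | q1 c' q' qf _ _ _ | q1 c' q' q'' r1 _ _ _ _ IH] //; by eexists.
Qed.

Lemma tau_end u : tauv u (size u).+1 [::] = [ffun s => s].
Proof. by apply/ffunP => s; rewrite !ffunE drop_oversize ?zip0. Qed.

Lemma marble_main : exists (S : finType) (s : S) (d : S -> Sigma -> S) (G : Q -> S -> Q -> Prop),
  forall q u qf, (exists x, runK c0 F delta mu sub q u x qf) <-> G q (foldl d s u) qf.
Proof.
exists {set Key}, s0, dB, GG => q u qf; split.
  move=> [x [i [v He]]].
  have [m Hm] := exec_reach He.
  case: (claim_fwd (leqnn _) Hm) => [HB | [q' [m' [_ [HB _]]]]].
    by move: HB; rewrite /BehAt addn1 take_size /GG -(tau_end u) -addn1 letter_end.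
  move: HB; rewrite /BehAt addn1 take_size -addn1 letter_end => /nextB_None [] //.
move=> HG.
have HB : BehAt u (size u + 1) c0 (tauv u (size u + 1) [::]) q (inr qf).
  by rewrite /BehAt addn1 take_size tau_end -addn1 letter_end.
have [m Hm] := claim_bwd (leqnn _) HB.
have [x [i [v He]]] := reach_exec Hm.
by exists x, i, v.
Qed.
End MarbleReg.

Lemma nmt_reg (Gamma : Type) (k : nat) (Sigma : Type) (nq : nat) (T : nmt Gamma k Sigma nq) :
  exists (S : finType) (s : S) (d : S -> Sigma -> S) (G : 'I_nq -> S -> 'I_nq -> Prop),
  forall q u qf, (exists x, opsem T q u x qf) <-> G q (foldl d s u) qf.
Proof.
elim: T => [Sig nq0 q0 F delta mu | k' Sig nq0 nc nq' c0 q0 F A IHA delta call ret mu].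
  exists {ffun 'I_nq0 -> 'I_nq0}, [ffun q => delta q LM],
    (fun (f : {ffun 'I_nq0 -> 'I_nq0}) a => [ffun q => delta (f q) (Sym a)]),
    (fun q (f : {ffun 'I_nq0 -> 'I_nq0}) qf => delta (f q) RM = qf /\ F qf) => q u qf.
  have Hf : forall (f : {ffun 'I_nq0 -> 'I_nq0}) w,
      foldl (fun (f : {ffun 'I_nq0 -> 'I_nq0}) a => [ffun q => delta (f q) (Sym a)]) f w q
      = foldl delta (f q) (map Sym w).
    by move=> f w; elim: w f => [|a w IH] f //=; rewrite IH ffunE.
  simpl; rewrite Hf ffunE -cats1 foldl_cat /=.
  split; first by move=> [x [-> H _]].
  by move=> [<- H]; eexists; split.
have [S' [s0' [d' [G' HA]]]] := IHA.
apply: (@marble_main _ _ _ _ c0 F delta mu _ S' s0' d'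
   (fun q c s q2 => exists p, G' (call q c) s p /\ q2 = ret q c p)).
move=> q c w q2; split.
  by move=> [y [p [Hp ->]]]; exists p; split=> //; apply/HA; exists y.
by move=> [p [/HA [y Hp] ->]]; exists y, p.
Qed.

Theorem mainTheorem10 (Sigma Gamma : finType) (k nq : nat)
    (T : nmt Gamma k Sigma nq) :
  regular (nmt_dom T).
Proof.
have [S [s [d [G HG]]]] := nmt_reg T.
exists #|S|, (enum_rank s), (fun i => pb (exists qf, G (init T) (enum_val i) qf)),
  (fun i a => enum_rank (d (enum_val i) a)) => w.
have Hf : forall s1, foldl (fun i a => enum_rank (d (enum_val i) a)) (enum_rank s1) w
    = enum_rank (foldl d s1 w).
  by elim: w => [|a w IH] s1 //=; rewrite enum_rankK IH.
rewrite Hf enum_rankK pbP /nmt_dom; split.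
  by move=> [x [qf H]]; exists qf; apply/HG; exists x.
by move=> [qf /HG [x H]]; exists x, qf.
Qed.
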